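(* Let $A, B, C, F \in \mathbb{R}^{n\times n}$ with $C$ invertible, and consider the matrix equation $$AX + B\lvert CX\rvert = F$$ in the unknown $X \in \mathbb{R}^{n\times n}$. Let $I$ be the $n\times n$ identity matrix and set $R = I\otimes AC^{-1}$ and $S = I\otimes B$ (matrices of size $n^2\times n^2$). The equation has exactly one solution if any one of the following holds: (i) the set $\{R+S,\ R-S\}$ has the column $\mathcal{W}$-property; (ii) $R+S$ is invertible and the set $\{I_{n^2},\ (R+S)^{-1}(R-S)\}$ has the column $\mathcal{W}$-property, where $I_{n^2}$ is the identity matrix of order $n^2$; (iii) $R+S$ is invertible and $(R+S)^{-1}(R-S)$ is a P-matrix; (iv) for all nonnegative diagonal matrices $F_1, F_2 \in \mathbb{R}^{n^2\times n^2}$ with all diagonal entries of $F_1+F_2$ positive, the matrix $(R+S)F_1 + (R-S)F_2$ is invertible.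
   Context: $\otimes$ denotes the Kronecker product and $\lvert M\rvert$ the entrywise absolute value. For a set $\mathcal{M}=\{M_1,M_2\}$ of $N\times N$ matrices, a column representative of $\mathcal{M}$ is a matrix $R'$ whose $j$-th column is either the $j$-th column of $M_1$ or the $j$-th column of $M_2$, for each $j=1,\dots,N$. The set $\mathcal{M}$ has the column $\mathcal{W}$-property if every column representative of $\mathcal{M}$ has positive determinant. A P-matrix is a square matrix all of whose principal minors are positive. *)

(* Defs.v *)
From HB Require Import structures.
From mathcomp Require Import all_boot all_order all_algebra.
From mathcomp Require Export mxtens.
Set Implicit Arguments. Unset Strict Implicit. Unset Printing Implicit Defensive.
Import Order.TTheory GRing.Theory Num.Theory.
Local Open Scope ring_scope.

(* Kronecker product: tensmx (notation A *t B) from mathcomp-real-closed's mxtens;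
   (A *t B) (i*p + j) (k*q + l) = A i k * B j l, the standard convention. *)

Definition absmx (R : numDomainType) m n (M : 'M[R]_(m, n)) : 'M[R]_(m, n) :=
  map_mx (fun x => `|x|) M.

Definition col_rep (R : Type) N (M1 M2 : 'M[R]_N) (b : 'I_N -> bool) : 'M[R]_N :=
  \matrix_(i, j) (if b j then M1 i j else M2 i j).

Definition column_W_property (R : numDomainType) N (M1 M2 : 'M[R]_N) : Prop :=
  forall b : 'I_N -> bool, 0 < \det (col_rep M1 M2 b).

Definition principal_submx (R : Type) N (M : 'M[R]_N) (J : {set 'I_N}) : 'M[R]_#|J| :=
  \matrix_(i, j) M (enum_val i) (enum_val j).

Definition P_matrix (R : numDomainType) N (M : 'M[R]_N) : Prop :=
  forall J : {set 'I_N}, J != set0 -> 0 < \det (principal_submx M J).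

Definition nonneg_diag (R : numDomainType) N (D : 'M[R]_N) : Prop :=
  is_diag_mx D /\ forall i, 0 <= D i i.

(* Main.v *)
Require Import Defs.
From HB Require Import structures.
From mathcomp Require Import all_boot all_order all_algebra.
From mathcomp Require Import mxtens.
From mathcomp Require Import ring lra.
Import Order.TTheory GRing.Theory Num.Theory.
Local Open Scope ring_scope.
Set Implicit Arguments. Unset Strict Implicit.

Section HLCP.
Variable K : realFieldType.
Variable N : nat.


Definition Wp (M1 M2 : 'M[K]_N) := forall a b : 'cV[K]_N, M1 *m a = M2 *m b ->
  (forall j, a j 0 * b j 0 <= 0) -> a = 0 /\ b = 0.

Definition gsol (M1 M2 : 'M[K]_N) (f : 'cV[K]_N) (U L : {set 'I_N}) (u v : 'cV[K]_N) :=
  M1 *m u - M2 *m v = f /\ forall i, if i \in L then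
     [/\ 0 <= u i 0, 0 <= v i 0 & u i 0 * v i 0 = 0]
   else if i \in U then v i 0 = 0 else u i 0 = 0.

Lemma cc_le (a b a' b' : K) : 0 <= a -> 0 <= b -> a * b = 0 ->
  0 <= a' -> 0 <= b' -> a' * b' = 0 -> (a - a') * (b - b') <= 0.
Proof.
move=> ha hb hab ha' hb' hab'.
have -> : (a - a') * (b - b') = - (a * b' + a' * b) by
  rewrite mulrBl !mulrBr hab hab'; ring.
by rewrite oppr_le0 addr_ge0 // mulr_ge0.
Qed.

Lemma zmod_diff (V : zmodType) (x1 y1 x2 y2 f : V) :
  x1 - y1 = f -> x2 - y2 = f -> x1 - x2 = y1 - y2.
Proof.
move=> h1 h2; apply/eqP; rewrite -subr_eq0; apply/eqP.
have -> : x1 - x2 - (y1 - y2) = (x1 - y1) - (x2 - y2).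
  by rewrite !opprB [x1 - x2 + _]addrACA [x1 - y1 + _]addrACA [- y1 + _]addrC.
by rewrite h1 h2 subrr.
Qed.

Definition splitv (U : {set 'I_N}) (c : 'cV[K]_N) (side : bool) : 'cV[K]_N :=
  \col_j (if (j \in U) == side then c j 0 else 0).

Definition Gmx (M1 M2 : 'M[K]_N) (U : {set 'I_N}) : 'M[K]_N :=
  \matrix_(i, j) (if j \in U then M1 i j else - M2 i j).

Lemma splitvE (M1 M2 : 'M[K]_N) U c :
  M1 *m splitv U c true - M2 *m splitv U c false = Gmx M1 M2 U *m c.
Proof.
apply/matrixP => i k; rewrite [k]ord1 !mxE -sumrB; apply: eq_bigr => j _.
rewrite !mxE; case: (j \in U) => /=; rewrite ?mulr0 ?subr0 ?sub0r ?mulNr //.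
Qed.

Lemma Gmx_unit (M1 M2 : 'M[K]_N) U : Wp M1 M2 -> Gmx M1 M2 U \in unitmx.
Proof.
move=> hW; rewrite unitmxE unitfE -det_tr; apply/negP => /det0P [v vn0 hv].
have hc : Gmx M1 M2 U *m v^T = 0 by rewrite -[Gmx _ _ _]trmxK -trmx_mul hv trmx0.
have H1 : M1 *m splitv U v^T true = M2 *m splitv U v^T false.
  by apply/eqP; rewrite -subr_eq0 splitvE hc.
have H2 : forall j, splitv U v^T true j 0 * splitv U v^T false j 0 <= 0.
  by move=> j; rewrite !mxE; case: (j \in U); rewrite /= ?mulr0 ?mul0r.
have [h1 h2] := hW _ _ H1 H2.
move/eqP: vn0; apply; apply/matrixP => k j; rewrite [k]ord1 !mxE.
have := congr1 (fun M : 'cV[K]_N => M j 0) h1; have := congr1 (fun M : 'cV[K]_N => M j 0) h2.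
by rewrite !mxE; case: (j \in U) => /= -> ->.
Qed.

Lemma base_sol (M1 M2 : 'M[K]_N) U f : Wp M1 M2 -> exists u v, gsol M1 M2 f U set0 u v.
Proof.
move=> hW; set c := invmx (Gmx M1 M2 U) *m f.
exists (splitv U c true), (splitv U c false); split.
  by rewrite splitvE mulKVmx // Gmx_unit.
by move=> i; rewrite in_set0 !mxE; case: (i \in U).
Qed.

Lemma ex_sol (M1 M2 : 'M[K]_N) f : Wp M1 M2 -> forall k (U L : {set 'I_N}), #|L| = k ->
  exists u v, gsol M1 M2 f U L u v.
Proof.
move=> hW; elim=> [|k IH] U L hL.
  by rewrite (cards0_eq hL); apply: base_sol.
have /card_gt0P [i iL] : (0 < #|L|)%N by rewrite hL.
have hL' : #|L :\ i| = k by move: hL; rewrite (cardsD1 i) iL add1n => [[]].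
have [ua [va [ea ha]]] := IH (i |: U) _ hL'.
have hai := ha i; rewrite setD11 setU11 /= in hai.
have hoth : forall (U' : {set 'I_N}) u v, (forall j, j != i -> (j \in U') = (j \in U)) ->
   gsol M1 M2 f U' (L :\ i) u v -> 0 <= u i 0 -> 0 <= v i 0 -> u i 0 * v i 0 = 0 ->
   gsol M1 M2 f U L u v.
  move=> U' u v hU' [e h] h1 h2 h3; split => // j.
  case: (eqVneq j i) => [->|ji]; first by rewrite iL.
  by have := h j; rewrite in_setD1 ji /= hU'.
case: (lerP 0 (ua i 0)) => hua.
  exists ua, va; apply: hoth (conj ea ha) _ _ _ => //.
  - by move=> j ji; rewrite in_setU1 (negbTE ji).
  - by rewrite hai.
  - by rewrite hai mulr0.
have [ub [vb [eb hb]]] := IH (U :\ i) _ hL'.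
have hbi := hb i; rewrite !setD11 /= in hbi.
case: (lerP 0 (vb i 0)) => hvb.
  exists ub, vb; apply: hoth (conj eb hb) _ _ _ => //.
  - by move=> j ji; rewrite in_setD1 ji.
  - by rewrite hbi.
  - by rewrite hbi mul0r.
exfalso.
have H1 : M1 *m (ua - ub) = M2 *m (va - vb).
  by rewrite !mulmxBr; apply: zmod_diff ea eb.
have H2 : forall j, (ua - ub) j 0 * (va - vb) j 0 <= 0.
  move=> j; rewrite !mxE.
  case: (eqVneq j i) => [->|ji].
    by rewrite hai hbi subr0 sub0r; nra.
  have := ha j; have := hb j; rewrite !in_setD1 ji /= in_setU1 (negbTE ji) /=.
  case: (j \in L) => /=.
    by move=> [? ? ?] [? ? ?]; apply: cc_le.
  by case: (j \in U) => /= -> ->; rewrite ?subrr ?mulr0 ?mul0r.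
have [h1 _] := hW _ _ H1 H2.
have := congr1 (fun M : 'cV[K]_N => M i 0) h1; rewrite !mxE hbi subr0 => hu.
by move: hua; rewrite hu ltxx.
Qed.

Lemma uniq_sol (M1 M2 : 'M[K]_N) f U U' u v u' v' : Wp M1 M2 ->
  gsol M1 M2 f U setT u v -> gsol M1 M2 f U' setT u' v' -> u = u' /\ v = v'.
Proof.
move=> hW [e h] [e' h'].
have H1 : M1 *m (u - u') = M2 *m (v - v').
  by rewrite !mulmxBr; apply: zmod_diff e e'.
have H2 : forall j, (u - u') j 0 * (v - v') j 0 <= 0.
  move=> j; rewrite !mxE; have := h j; have := h' j; rewrite in_setT.
  by move=> [? ? ?] [? ? ?]; apply: cc_le.
have [h1 h2] := hW _ _ H1 H2.
by split; apply/eqP; rewrite -subr_eq0; apply/eqP.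
Qed.

End HLCP.

Section T.
Variable K : realFieldType.
Variable N : nat.
Local Notation Wp := (@Wp K N).

Definition cmb (M1 M2 : 'M[K]_N) (t : 'I_N -> K) :=
  M1 *m diag_mx (\row_j t j) + M2 *m diag_mx (\row_j (1 - t j)).

Definition Tcond (M1 M2 : 'M[K]_N) := forall t : 'I_N -> K,
  (forall j, 0 <= t j <= 1) -> cmb M1 M2 t \in unitmx.

Lemma frac01 (a b : K) : a * b <= 0 -> a - b != 0 -> 0 <= a / (a - b) <= 1.
Proof.
move=> hab hc.
have hcc : 0 < (a - b) * (a - b) by rewrite lt_def mulf_neq0 //= -expr2 sqr_ge0.
have -> : a / (a - b) = (a * (a - b)) / ((a - b) * (a - b)) by field.
rewrite divr_ge0 ?(ltW hcc) /= ?ler_pdivrMr ?mul1r //; nra.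
Qed.

Lemma T_Wp (M1 M2 : 'M[K]_N) : Tcond M1 M2 -> Wp M1 M2.
Proof.
move=> hT a b hab hp.
have [c cE] : {c : 'cV[K]_N | c = a - b} by exists (a - b).
have h0 : forall j, c j 0 = 0 -> a j 0 = 0 /\ b j 0 = 0.
  move=> j; rewrite cE !mxE => /eqP; rewrite subr_eq0 => /eqP e.
  have := hp j; rewrite e => hb; have hb0 : b j 0 = 0 by nra.
  by rewrite hb0.
pose t j := if c j 0 == 0 then 1 else a j 0 / c j 0.
have ht : forall j, 0 <= t j <= 1.
  move=> j; rewrite /t; case: eqP => [_|/eqP hc]; first by rewrite ler01 lexx.
  by move: hc; rewrite cE !mxE => hc; apply: frac01.
have e1 : diag_mx (\row_j t j) *m c = a.
  rewrite mul_diag_mx; apply/matrixP => j k; rewrite [k]ord1 !mxE /t.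
  case: eqP => [hc|/eqP hc]; first by have [-> _] := h0 _ hc; rewrite mul1r.
  by rewrite divfK.
have e2 : diag_mx (\row_j (1 - t j)) *m c = - b.
  rewrite mul_diag_mx; apply/matrixP => j k; rewrite [k]ord1 !mxE /t.
  case: eqP => [hc|/eqP hc]; first by have [_ ->] := h0 _ hc; rewrite subrr mul0r oppr0.
  by rewrite mulrBl mul1r divfK // cE !mxE; ring.
have hz : cmb M1 M2 t *m c = 0.
  by rewrite /cmb mulmxDl -!mulmxA e1 e2 mulmxN hab subrr.
have c0 : c = 0 by rewrite -(mulKmx (hT t ht) c) hz mulmx0.
have hab0 j : a j 0 = 0 /\ b j 0 = 0 by apply: h0; rewrite c0 mxE.
by split; apply/matrixP => j k; rewrite [k]ord1 mxE; case: (hab0 j).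
Qed.

Definition Zt (X Y : 'M[K]_N) (t : 'I_N -> K) :=
  \matrix_(i, j) (t j * X i j + (1 - t j) * Y i j).

Lemma cmbE X Y t : cmb X Y t = Zt X Y t.
Proof.
by apply/matrixP => i j; rewrite /cmb !mul_mx_diag !mxE; ring.
Qed.

Definition fset (t : 'I_N -> K) := [set j | (t j != 0) && (t j != 1)].

Lemma colW_pos (X Y : 'M[K]_N) : column_W_property X Y ->
  forall t, (forall j, 0 <= t j <= 1) -> 0 < \det (Zt X Y t).
Proof.
move=> hW.
suff: forall (k : nat) (t : 'I_N -> K), (forall j, 0 <= t j <= 1) ->
    (#|fset t| <= k)%N -> 0 < \det (Zt X Y t).
  by move=> H t ht; apply: (H _ t ht (leqnn _)).
elim=> [|k IH] t ht hk.
  have e : Zt X Y t = col_rep X Y (fun j => t j == 1).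
    apply/matrixP => i j; rewrite !mxE.
    have : j \notin fset t.
      by apply/negP => hj; move: hk; rewrite leqn0 => /eqP/cards0_eq e; rewrite e in_set0 in hj.
    rewrite inE negb_and !negbK; case: eqP => [->|_] /=.
      by rewrite eq_sym oner_eq0 mul0r add0r subr0 mul1r.
    by move=> /eqP ->; rewrite eqxx subrr mul0r addr0 mul1r.
  by rewrite e; apply: hW.
case: (leqP #|fset t| k) => hk'; first exact: IH.
have /card_gt0P [j hj] : (0 < #|fset t|)%N.
  by apply: leq_ltn_trans hk'.
pose t1 l := if l == j then 1 else t l.
pose t0 l := if l == j then 0 else t l.
have hcard : forall s : 'I_N -> K, (forall l, l != j -> s l = t l) -> (s j == 0) || (s j == 1) ->
    (#|fset s| <= k)%N.
  move=> s hs hsj.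
  have sub : fset s \subset fset t :\ j.
    apply/subsetP => l; rewrite !inE; case: (eqVneq l j) => [->|lj] /=.
      by case/orP: hsj => /eqP ->; rewrite eqxx ?andbF.
    by rewrite hs.
  apply: leq_trans (subset_leq_card sub) _.
  by move: hk; rewrite (cardsD1 j) hj add1n ltnS.
have hj' := hj; rewrite inE in hj'; case/andP: hj' => hj0 hj1.
have ht01 : 0 < t j < 1.
  have := ht j; case/andP => h1 h2; by rewrite !lt_def h1 h2 andbT hj0 eq_sym hj1.
have d1 : 0 < \det (Zt X Y t1).
  apply: IH.
    by move=> l; rewrite /t1; case: eqP => _; rewrite ?lexx ?ler01.
  by apply: hcard; [move=> l /negbTE; rewrite /t1 => -> | rewrite /t1 eqxx eqxx orbT].
have d0 : 0 < \det (Zt X Y t0).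
  apply: IH.
    by move=> l; rewrite /t0; case: eqP => _; rewrite ?lexx ?ler01.
  by apply: hcard; [move=> l /negbTE; rewrite /t0 => -> | rewrite /t0 eqxx eqxx].
have -> : \det (Zt X Y t) = t j * \det (Zt X Y t1) + (1 - t j) * \det (Zt X Y t0).
  rewrite -det_tr -[\det (Zt X Y t1)]det_tr -[\det (Zt X Y t0)]det_tr.
  apply: (@determinant_multilinear _ _ _ _ _ j).
  - apply/matrixP => i l; rewrite !mxE /t1 /t0 eqxx; ring.
  - apply/matrixP => i l; rewrite !mxE /t1 eq_sym (negbTE (neq_lift _ _)) //.
  - apply/matrixP => i l; rewrite !mxE /t0 eq_sym (negbTE (neq_lift _ _)) //.
case/andP: ht01 => a1 a2.
by apply: addr_gt0; apply: mulr_gt0 => //; rewrite subr_gt0.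
Qed.

End T.

Section P3.
Variable K : realFieldType.

Lemma det_reindex N m (X : 'M[K]_N) (f : 'I_m -> 'I_N) : bijective f ->
  \det (\matrix_(i, j) X (f i) (f j)) = \det X.
Proof.
move=> bf; have e : m = N by have := bij_eq_card bf; rewrite !card_ord.
subst m.
pose s := perm.perm (bij_inj bf).
have -> : \matrix_(i, j) X (f i) (f j) = row_perm s (col_perm s X).
  by apply/matrixP => i j; rewrite !mxE !perm.permE.
by rewrite row_permE col_permE !det_mulmx !det_perm perm.odd_permV mulrCA -expr2 sqrr_sign mulr1.
Qed.

Lemma det_colrep1 N (P : 'M[K]_N) (b : 'I_N -> bool) :
  \det (col_rep 1%:M P b) = \det (principal_submx P [set j | ~~ b j]).
Proof.
set J := [set j | ~~ b j].
pose f (k : 'I_(#|J| + #|~: J|)) : 'I_N :=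
  match split k with inl a => enum_val a | inr c => enum_val c end.
have fi : injective f.
  move=> x y; rewrite /f -[x]splitK -[y]splitK.
  case: (split x) => a; case: (split y) => c; rewrite !unsplitK => e.
  - by rewrite (enum_val_inj e).
  - by move: (enum_valP c); rewrite -e in_setC (enum_valP a).
  - by move: (enum_valP a); rewrite e in_setC (enum_valP c).
  - by rewrite (enum_val_inj e).
have fb : bijective f.
  apply: (inj_card_bij fi); apply: eq_leq; by rewrite [in RHS]card_ord cardsC.
rewrite -(det_reindex _ fb).
set Z := \matrix_(i, j) _.
have sl : forall i, split (lshift #|~: J| i) = inl i := fun i => unsplitK (inl _ i).
have sr : forall i, split (rshift #|J| i) = inr i := fun i => unsplitK (inr _ i).
have bJ : forall j : 'I_#|J|, b (enum_val j) = false.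
  by move=> j; have := enum_valP j; rewrite inE => /negbTE.
have bJc : forall j : 'I_#|~: J|, b (enum_val j) = true.
  by move=> j; have := enum_valP j; rewrite !inE negbK.
have e1 : ulsubmx Z = principal_submx P J.
  by apply/matrixP => i j; rewrite !mxE /f sl sl bJ.
have e2 : ursubmx Z = 0.
  apply/matrixP => i j; rewrite !mxE /f sl sr bJc.
  case: eqP => // ee; exfalso; move: (enum_valP j); by rewrite -ee in_setC (enum_valP i).
have e3 : drsubmx Z = 1%:M.
  by apply/matrixP => i j; rewrite !mxE /f sr sr bJc (inj_eq enum_val_inj).

by rewrite -(submxK Z) e1 e2 e3 det_lblock det1 mulr1.
Qed.

End P3.

Section Vec.
Variable K : realFieldType.
Variable n : nat.

Definition vecm (Y : 'M[K]_n) : 'cV[K]_(n * n) :=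
  \col_k Y (mxtens_unindex k).2 (mxtens_unindex k).1.

Definition unvec (y : 'cV[K]_(n * n)) : 'M[K]_n :=
  \matrix_(l, k) y (mxtens_index (k, l)) 0.

Lemma vecK y : vecm (unvec y) = y.
Proof.
apply/matrixP => k z; rewrite [z]ord1 !mxE; case: (mxtens_indexP k) => i j.
by rewrite mxtens_indexK.
Qed.

Lemma vec_inj : injective vecm.
Proof.
move=> Y1 Y2 e; apply/matrixP => l k.
have := congr1 (fun y : 'cV[K]_(n * n) => y (mxtens_index (k, l)) 0) e.
by rewrite !mxE mxtens_indexK.
Qed.

Lemma vecD Y1 Y2 : vecm (Y1 + Y2) = vecm Y1 + vecm Y2.
Proof. by apply/matrixP => k z; rewrite !mxE. Qed.

Lemma vec_abs Y : vecm (absmx Y) = absmx (vecm Y).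
Proof. by apply/matrixP => k z; rewrite !mxE. Qed.

Lemma vec_mul (M Y : 'M[K]_n) : ((1%:M : 'M[K]_n) *t M) *m vecm Y = vecm (M *m Y).
Proof.
apply/matrixP => k z; rewrite [z]ord1; case: (mxtens_indexP k) => i j.
rewrite !mxE mxtens_indexK /=.
rewrite (reindex _ (onW_bij _ (Bijective (@mxtens_indexK n n) (@mxtens_unindexK n n)))) /=.
transitivity (\sum_(a < n) \sum_(l < n) ((i == a)%:R * (M j l * Y l a))).
  rewrite pair_bigA; apply: eq_bigr => [[a l]] _ /=.
  by rewrite tensmxE !mxE mxtens_indexK /= mulrA.
rewrite (bigD1 i) //= [X in _ + X]big1 => [|a ai]; last first.
  by apply: big1 => l _; rewrite eq_sym (negbTE ai) mul0r.
by rewrite addr0; apply: eq_bigr => l _; rewrite eqxx mul1r.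
Qed.

End Vec.

Lemma zr (V : zmodType) (a b c d : V) : a - b + (c + d) = a + c - (b - d).
Proof. by rewrite opprB addrACA [- b + d]addrC. Qed.

Section GAVE.
Variable K : realFieldType.
Variable N : nat.
Variables R S : 'M[K]_N.

Lemma abs_comp (u v : K) : 0 <= u -> 0 <= v -> u * v = 0 -> `|u - v| = u + v.
Proof.
move=> hu hv /eqP; rewrite mulf_eq0 => /orP [] /eqP e; rewrite e.
  by rewrite sub0r normrN add0r ger0_norm.
by rewrite subr0 addr0 ger0_norm.
Qed.

Lemma hl_eq (p q : 'cV[K]_N) :
  (R + S) *m p - (R - S) *m q = R *m (p - q) + S *m (p + q).
Proof. by rewrite mulmxDl mulmxBl mulmxBr mulmxDr zr. Qed.

Lemma gave_ex : Wp (R + S) (R - S) -> forall f : 'cV[K]_N, exists y : 'cV[K]_N, R *m y + S *m absmx y = f.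
Proof.
move=> hW f; have [u [v [e h]]] := @ex_sol _ _ _ _ f hW _ set0 setT erefl.
exists (u - v).
have ha : absmx (u - v) = u + v.
  apply/matrixP => i j; rewrite [j]ord1 !mxE.
  by have := h i; rewrite in_setT => -[]; apply: abs_comp.
by rewrite ha -e hl_eq.
Qed.

Definition posp (y : 'cV[K]_N) := 2^-1 *: (absmx y + y).
Definition negp (y : 'cV[K]_N) := 2^-1 *: (absmx y - y).

Lemma posp_negp (y : 'cV[K]_N) : posp y - negp y = y.
Proof. apply/matrixP => i j; rewrite !mxE; by field. Qed.

Lemma posp_negpD (y : 'cV[K]_N) : posp y + negp y = absmx y.
Proof. apply/matrixP => i j; rewrite !mxE; by field. Qed.

Lemma key (y : 'cV[K]_N) : gsol (R + S) (R - S) (R *m y + S *m absmx y) set0 setT (posp y) (negp y).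
Proof.
split; first by rewrite hl_eq posp_negp posp_negpD.
move=> i; rewrite in_setT !mxE.
have h1 := ler_norm (y i 0); have h2 := ler_norm (- y i 0); rewrite normrN in h2.
have hn : `|y i 0| ^+ 2 = y i 0 ^+ 2 by rewrite real_normK ?num_real.
split.
- by apply: mulr_ge0; [rewrite invr_ge0 ler0n | lra].
- by apply: mulr_ge0; [rewrite invr_ge0 ler0n | lra].
have -> : 2^-1 * (`|y i 0| + y i 0) * (2^-1 * (`|y i 0| - y i 0)) =
   2^-1 * 2^-1 * (`|y i 0| ^+ 2 - y i 0 ^+ 2) by ring.
by rewrite hn subrr mulr0.
Qed.

Lemma gave_uniq : Wp (R + S) (R - S) -> forall f y1 y2 : 'cV[K]_N,
  R *m y1 + S *m absmx y1 = f -> R *m y2 + S *m absmx y2 = f -> y1 = y2.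
Proof.
move=> hW f y1 y2 e1 e2.
have k1 := key y1; have k2 := key y2; rewrite e1 in k1; rewrite e2 in k2.
have [hp hq] := uniq_sol hW k1 k2.
by rewrite -(posp_negp y1) -(posp_negp y2) hp hq.
Qed.

End GAVE.

Unset Implicit Arguments.

Theorem theorem4p3 (K : realFieldType) (n : nat) (A B C F : 'M[K]_n) :
  C \in unitmx ->
  let R := (1%:M : 'M[K]_n) *t (A *m invmx C) in
  let S := (1%:M : 'M[K]_n) *t B in
  [\/ column_W_property (R + S) (R - S),
      (R + S \in unitmx) /\ column_W_property 1%:M (invmx (R + S) *m (R - S)),
      (R + S \in unitmx) /\ P_matrix (invmx (R + S) *m (R - S))
    | forall F1 F2 : 'M[K]_(n * n),
        nonneg_diag F1 -> nonneg_diag F2 ->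
        (forall i, 0 < F1 i i + F2 i i) ->
        (R + S) *m F1 + (R - S) *m F2 \in unitmx] ->
  exists! X : 'M[K]_n, A *m X + B *m absmx (C *m X) = F.
Proof.
move=> hC R S H.
have hii : forall (P : 'M[K]_(n * n)), R + S \in unitmx ->
    column_W_property 1%:M P -> P = invmx (R + S) *m (R - S) -> Tcond (R + S) (R - S).
  move=> P hu hP eP t ht.
  have := colW_pos hP ht; rewrite -cmbE => hpos.
  have -> : cmb (R + S) (R - S) t = (R + S) *m cmb 1%:M P t.
    by rewrite /cmb mulmxDr mul1mx mulmxA eP mulmxA mulmxV // mul1mx.
  by rewrite unitmx_mul hu unitmxE unitfE lt0r_neq0.
have hW : Wp (R + S) (R - S).
  apply: T_Wp; case: H => [h|[hu h]|[hu h]|h].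
  - move=> t ht; rewrite unitmxE unitfE cmbE; exact: lt0r_neq0 (colW_pos h ht).
  - exact: hii h erefl.
  - apply: (hii _ hu _ erefl) => b.
    case: (eqVneq [set j | ~~ b j] set0) => [e|ne].
      have -> : col_rep 1%:M (invmx (R + S) *m (R - S)) b = 1%:M.
        apply/matrixP => i j; rewrite !mxE.
        have : j \notin [set j | ~~ b j] by rewrite e in_set0.
        by rewrite inE negbK => ->.
      by rewrite det1 ltr01.
    by rewrite det_colrep1; apply: h.
  - move=> t ht; apply: h.
    + by split; [apply: diag_mx_is_diag | move=> i; rewrite !mxE eqxx mulr1n; case/andP: (ht i)].
    + split; [apply: diag_mx_is_diag | move=> i; rewrite !mxE eqxx mulr1n].
      by case/andP: (ht i) => _; rewrite subr_ge0.
    + by move=> i; rewrite !mxE !eqxx !mulr1n addrC subrK ltr01.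
have hvec : forall Y : 'M[K]_n, R *m vecm Y + S *m absmx (vecm Y) =
    vecm ((A *m invmx C) *m Y + B *m absmx Y).
  by move=> Y; rewrite vecD -vec_abs /R /S !vec_mul.
have [y hy] := gave_ex hW (vecm F).
exists (invmx C *m unvec y); split.
  apply: vec_inj; rewrite mulKVmx // mulmxA -hvec vecK //.
move=> X hX.
have e : vecm (C *m X) = y.
  apply: (gave_uniq hW _ hy).
  by rewrite hvec mulmxA mulmxKV // hX.
have uv : unvec (vecm (C *m X)) = C *m X by apply: vec_inj; rewrite vecK.
by rewrite -e uv mulKmx.
Qed.
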